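(* Let $G=(X,\Sigma,\delta,X_0)$ be an NFA with observable events $\Sigma_o$ and a nonempty set of secret states $X_S\subseteq X$, and let $K\in\mathbb N$. Then $G$ is $K$-SSO w.r.t. $\Sigma_o$ and $X_S$ if and only if $G$ is $\min\{K,\ |\hat X|\,2^{|X\setminus X_S|}-1\}$-SSO w.r.t. $\Sigma_o$ and $X_S$, where $\hat X$ is the set of states of $G$ reachable from $X_S$.
   Context: An NFA is $G=(X,\Sigma,\delta,X_0)$ with finite state set $X$, finite event set $\Sigma$, initial states $X_0\subseteq X$, and transition function $\delta:X\times\Sigma\to 2^X$ extended to strings in the usual way. $\Sigma=\Sigma_o\dot\cup\Sigma_{uo}$, and $P:\Sigma^*\to\Sigma_o^*$ is the natural projection erasing unobservable events. $X_{NS}=X\setminus X_S$. A run $x_0\xrightarrow{s_1}x_1\cdots\xrightarrow{s_n}x_n$ means $x_{k+1}\in\delta(x_k,s_{k+1})$, written $x_0\xrightarrow{s}x_n$; it is non-secret if all its states lie in $X_{NS}$. $\hat X$ is the set of states $x$ with $x\in\delta(x_s,w)$ for some $x_s\in X_S$, $w\in\Sigma^*$ (including $X_S$ itself). $K$-SSO: $G$ is strongly $K$-step opaque w.r.t. $\Sigma_o$ and $X_S$ if for every run $x_0\xrightarrow{s}x_s\xrightarrow{t}x_t$ with $x_0\in X_0$, $x_s\in X_S$, $|P(t)|\le K$, there exists a run $x_0'\xrightarrow{s'}x_s'\xrightarrow{t'}x_t'$ with $x_0'\in X_0$, $P(s')=P(s)$, $P(t')=P(t)$, and the subrun $x_s'\xrightarrow{t'}x_t'$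 non-secret. *)

(* Defs.v *)
From mathcomp Require Import all_boot.
Set Implicit Arguments. Unset Strict Implicit. Unset Printing Implicit Defensive.

(* An NFA G = (X, Sigma, delta, X0): X, Sigma finite types,
   delta : X -> Sigma -> {set X}, X0 : {set X}.
   Observable events Sigma_o : {set Sigma}; the rest are unobservable. *)

(* A run from x is encoded as the sequence of (event, state reached) pairs:
   x --a1--> y1 --a2--> y2 ... ; [::] is the empty run at x. *)
Fixpoint is_run (X Sigma : finType) (delta : X -> Sigma -> {set X})
    (x : X) (p : seq (Sigma * X)) : bool :=
  match p with
  | [::] => true
  | (a, y) :: p' => (y \in delta x a) && is_run delta y p'
  end.

Definition run_label (X Sigma : Type) (p : seq (Sigma * X)) : seq Sigma := map fst p.
Definition run_end (X Sigma : Type) (x : X) (p : seq (Sigma * X)) : X := last x (map snd p).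
Definition run_states (X Sigma : Type) (x : X) (p : seq (Sigma * X)) : seq X := x :: map snd p.

Definition proj (Sigma : finType) (So : {set Sigma}) (s : seq Sigma) : seq Sigma :=
  [seq a <- s | a \in So].

Definition K_SSO (X Sigma : finType) (delta : X -> Sigma -> {set X}) (X0 : {set X})
    (So : {set Sigma}) (XS : {set X}) (K : nat) : Prop :=
  forall (x0 : X) (p1 p2 : seq (Sigma * X)),
    x0 \in X0 -> is_run delta x0 p1 ->
    run_end x0 p1 \in XS ->
    is_run delta (run_end x0 p1) p2 ->
    size (proj So (run_label p2)) <= K ->
    exists (x0' : X) (q1 q2 : seq (Sigma * X)),
      [/\ x0' \in X0, is_run delta x0' q1, is_run delta (run_end x0' q1) q2,
          proj So (run_label q1) = proj So (run_label p1) &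
          (proj So (run_label q2) = proj So (run_label p2) /\
           all (fun x => x \notin XS) (run_states (run_end x0' q1) q2))].

Definition step_rel (X Sigma : finType) (delta : X -> Sigma -> {set X}) : rel X :=
  fun x y => [exists a : Sigma, y \in delta x a].

Definition Xhat (X Sigma : finType) (delta : X -> Sigma -> {set X}) (XS : {set X})
  : {set X} :=
  [set x | [exists xs in XS, connect (step_rel delta) xs x]].

(* Main.v *)
Require Import Defs.
From mathcomp Require Import all_boot.
From Stdlib Require ClassicalDescription.
Set Implicit Arguments. Unset Strict Implicit. Unset Printing Implicit Defensive.

Definition pb (P : Prop) : bool :=
  if ClassicalDescription.excluded_middle_informative P then true else false.

Lemma pbP (P : Prop) : pb P = true <-> P.
Proof. rewrite /pb; case: ClassicalDescription.excluded_middle_informative => //; split => //. Qed.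

Section Pump.
Variables (X Sigma : finType) (delta : X -> Sigma -> {set X}) (X0 : {set X})
  (So : {set Sigma}) (XS : {set X}).

Definition Pr (q : seq (Sigma * X)) : seq Sigma := proj So (run_label q).

Lemma Pr_cat p q : Pr (p ++ q) = Pr p ++ Pr q.
Proof. by rewrite /Pr /proj /run_label map_cat filter_cat. Qed.

Lemma is_run_cat (x : X) (p q : seq (Sigma * X)) :
  is_run delta x (p ++ q) = is_run delta x p && is_run delta (run_end x p) q.
Proof.
elim: p x => [|[a y] p IH] x /=; first by rewrite /run_end.
by rewrite IH andbA.
Qed.

Lemma run_end_cat (x : X) (p q : seq (Sigma * X)) : run_end x (p ++ q) = run_end (run_end x p) q.
Proof. by rewrite /run_end map_cat last_cat. Qed.

Lemma all_states_cat (f : pred X) (x : X) (p q : seq (Sigma * X)) :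
  all f (run_states x (p ++ q)) =
  all f (run_states x p) && all f (run_states (run_end x p) q).
Proof.
elim: p x => [|[a y] p IH] x.
  by rewrite /run_states /run_end /=; case: (f x).
move: (IH y); rewrite /run_states /run_end /= => ->.
by rewrite !andbA.
Qed.

Lemma run_connect (x : X) (p : seq (Sigma * X)) :
  is_run delta x p -> connect (step_rel delta) x (run_end x p).
Proof.
elim: p x => [|[a y] p IH] x /=; first by rewrite /run_end.
case/andP=> Hy Hp.
apply: connect_trans (connect1 _) (IH _ Hp).
by apply/existsP; exists a.
Qed.

Lemma proj_split (q : seq (Sigma * X)) w v :
  Pr q = w ++ v ->
  exists2 k, k <= size q & Pr (take k q) = w /\ Pr (drop k q) = v.
Proof.
elim: q w => [|[a y] q IH] w.
  case: w => [|b w] //= H; exists 0 => //; split => //.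
case: w => [|b w] H.
  by exists 0 => //; rewrite take0 drop0.
move: H; rewrite /Pr /proj /run_label /=; case: ifP => Ha H.
  case: H => <- H.
  have [k Hk [H1 H2]] := IH w H.
  rewrite /Pr /proj /run_label in H1 H2.
  by exists k.+1 => //=; rewrite Ha; split => //; rewrite H1.
have [k Hk [H1 H2]] := IH (b :: w) H.
rewrite /Pr /proj /run_label in H1 H2.
by exists k.+1 => //=; rewrite Ha; split.
Qed.

Definition Rr (u w : seq Sigma) (y : X) : Prop :=
  exists x0' q1 q2, [/\ x0' \in X0, is_run delta x0' q1,
    is_run delta (run_end x0' q1) q2, Pr q1 = u &
    [/\ Pr q2 = w, all (fun x => x \notin XS) (run_states (run_end x0' q1) q2)
      & run_end (run_end x0' q1) q2 = y]].

Definition NS (y : X) (v : seq Sigma) (z : X) : Prop :=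
  exists q, [/\ is_run delta y q, Pr q = v,
    all (fun x => x \notin XS) (run_states y q) & run_end y q = z].

Definition good (u w : seq Sigma) : Prop :=
  exists (x0' : X) (q1 q2 : seq (Sigma * X)),
      [/\ x0' \in X0, is_run delta x0' q1, is_run delta (run_end x0' q1) q2,
          proj So (run_label q1) = u &
          (proj So (run_label q2) = w /\
           all (fun x => x \notin XS) (run_states (run_end x0' q1) q2))].

Lemma good_R u w : good u w <-> exists y, Rr u w y.
Proof.
split.
  move=> [x0' [q1 [q2 [H1 H2 H3 H4 [H5 H6]]]]].
  by exists (run_end (run_end x0' q1) q2), x0', q1, q2.
move=> [y [x0' [q1 [q2 [H1 H2 H3 H4 [H5 H6 _]]]]]].
by exists x0', q1, q2.
Qed.

Lemma R_split u w v z : Rr u (w ++ v) z -> exists2 y, Rr u w y & NS y v z.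
Proof.
move=> [x0' [q1 [q2 [H1 H2 H3 H4 [H5 H6 H7]]]]].
have [k _ [Ha Hb]] := proj_split H5.
move: H3 H6 H7; rewrite -(cat_take_drop k q2) is_run_cat all_states_cat run_end_cat.
case/andP=> R1 R2; case/andP=> A1 A2 E.
exists (run_end (run_end x0' q1) (take k q2)).
  by exists x0', q1, (take k q2).
by exists (drop k q2).
Qed.

Lemma R_join u w v y z : Rr u w y -> NS y v z -> Rr u (w ++ v) z.
Proof.
move=> [x0' [q1 [q2 [H1 H2 H3 H4 [H5 H6 H7]]]]] [q [Q1 Q2 Q3 Q4]].
exists x0', q1, (q2 ++ q); split => //.
  by rewrite is_run_cat H3 H7.
split.
- by rewrite Pr_cat H5 Q2.
- by rewrite all_states_cat H6 H7.
- by rewrite run_end_cat H7.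
Qed.

Definition Sset (u w : seq Sigma) : {set X} := [set y | pb (Rr u w y)].

Lemma pump (N : nat) :
  #|Xhat delta XS| * 2 ^ #|~: XS| = N.+1 ->
  K_SSO delta X0 So XS N ->
  forall x0 p1 p2, x0 \in X0 -> is_run delta x0 p1 ->
    run_end x0 p1 \in XS -> is_run delta (run_end x0 p1) p2 ->
    good (Pr p1) (Pr p2).
Proof.
move=> hprod H x0 p1 p2 hx0 hp1 hxs.
set xs := run_end x0 p1; set u := Pr p1.
have [n] := ubnP (size (Pr p2)); elim: n p2 => // n IHn p2 Hlt Hrun.
case: (leqP (size (Pr p2)) N) => hN.
  exact: (H x0 p1 p2 hx0 hp1 hxs Hrun hN).
set m := size (Pr p2).
pose cut := fun i : nat => find (fun k : nat => size (Pr (take k p2)) == i) (iota 0 (size p2).+1).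
have Hcut : forall i, i <= m -> size (Pr (take (cut i) p2)) = i.
  move=> i him.
  have := proj_split (esym (cat_take_drop i (Pr p2))).
  case=> k Hk [Hk1 _].
  have Hhas : has (fun k => size (Pr (take k p2)) == i) (iota 0 (size p2).+1).
    apply/hasP; exists k; first by rewrite mem_iota.
    by rewrite Hk1 size_takel.
  have := nth_find 0 Hhas.
  rewrite has_find size_iota in Hhas.
  by rewrite nth_iota // add0n => /eqP.
have Hrunk : forall k, is_run delta xs (take k p2) /\
    is_run delta (run_end xs (take k p2)) (drop k p2).
  move=> k; have := Hrun; rewrite -{1}(cat_take_drop k p2) is_run_cat.
  by case/andP.
pose F k := (run_end xs (take k p2), Sset u (Pr (take k p2))).
pose L := [seq F (cut i) | i <- iota 0 m.+1].
have sizeL : size L = m.+1 by rewrite size_map size_iota.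
pose A := setX (Xhat delta XS) (powerset (~: XS)).
have nuniq : ~~ uniq L.
  apply/negP => Hu.
  have HS : {subset L <= enum A}.
    move=> x /mapP [i _ ->]; rewrite mem_enum /A /F in_setX; apply/andP; split.
      rewrite inE; apply/existsP; exists xs; rewrite hxs /=.
      exact: run_connect (proj1 (Hrunk _)).
    rewrite powersetE; apply/subsetP => y; rewrite inE => /pbP.
    move=> [x0' [q1 [q2 [_ _ _ _ [_ H6 H7]]]]].
    rewrite inE; move/allP: H6; apply; rewrite -H7 /run_end /run_states.
    exact: mem_last.
  have := uniq_leq_size Hu HS; rewrite -cardE cardsX card_powerset.
  by rewrite hprod sizeL ltnS leqNgt hN.
have [i [j [ij jL Heq]]] := uniqPn (F 0) nuniq.
rewrite sizeL in jL.
have iL : i < m.+1 by apply: ltn_trans jL.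
rewrite /L (nth_map 0) ?size_iota // (nth_map 0) ?size_iota // !nth_iota //
  !add0n /F in Heq.
case: Heq => Es ES.
have Hi := Hcut i iL; have Hj := Hcut j jL.
set ki := cut i in Es ES Hi; set kj := cut j in Es ES Hj.
pose p2' := take ki p2 ++ drop kj p2.
have Hrun' : is_run delta xs p2'.
  rewrite is_run_cat (proj1 (Hrunk ki)) Es /=; exact: proj2 (Hrunk kj).
have Hsz : size (Pr p2') < n.
  have E2 : Pr p2 = Pr (take kj p2) ++ Pr (drop kj p2)
    by rewrite -Pr_cat cat_take_drop.
  move: Hlt; rewrite /p2' Pr_cat E2 !size_cat Hi Hj ltnS.
  by apply: leq_trans; rewrite ltn_add2r.
have := IHn p2' Hsz Hrun'.
case/good_R => z; rewrite /p2' Pr_cat => /R_split [y Ry NSy].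
apply/good_R; exists z.
rewrite -(cat_take_drop kj p2) Pr_cat; apply: R_join NSy.
have : y \in Sset u (Pr (take ki p2)) by rewrite inE; apply/pbP.
by rewrite ES inE => /pbP.
Qed.

End Pump.

Theorem corollary3p1 (X Sigma : finType) (delta : X -> Sigma -> {set X})
    (X0 : {set X}) (So : {set Sigma}) (XS : {set X}) (K : nat) :
  XS != set0 ->
  (K_SSO delta X0 So XS K <->
   K_SSO delta X0 So XS (minn K (#|Xhat delta XS| * 2 ^ #|~: XS| - 1))).
Proof.
move=> hXS.
set P0 := #|Xhat delta XS| * 2 ^ #|~: XS|.
set M := P0 - 1.
case: (leqP K M) => hKM.
  by [].
split.
  move=> HK x0 p1 p2 a b c d e; apply: (HK x0 p1 p2 a b c d); exact: (leq_trans e (ltnW hKM)).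
have hprod : #|Xhat delta XS| * 2 ^ #|~: XS| = M.+1.
  rewrite /M /P0 subn1 prednK // muln_gt0 expn_gt0 /= andbT.
  case/set0Pn: hXS => xs hxs; apply/card_gt0P; exists xs.
  by rewrite inE; apply/existsP; exists xs; rewrite hxs connect0.
move=> HM x0 p1 p2 a b c d _.
exact: (pump hprod HM a b c d).
Qed.
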